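(* The LDP-FPMiner algorithm described below satisfies $\epsilon$-local differential privacy: every user's transaction is used in exactly one randomized report, and the map from the user's transaction to that report is an $\epsilon$-locally differentially private algorithm; all remaining computations are performed by the analyst on the reports only.
   Context: A randomized algorithm $\mathcal{A}$ satisfies $\epsilon$-local differential privacy ($\epsilon$-LDP) if for all inputs $t_i,t_j$ and every possible output $\mathcal{O}$, $\Pr[\mathcal{A}(t_i)=\mathcal{O}]\le e^{\epsilon}\Pr[\mathcal{A}(t_j)=\mathcal{O}]$. Optimized Local Hashing (OLH) with budget $\epsilon$ over a finite domain $D$: with $g=\lceil e^\epsilon+1\rceil$, a user with value $u\in D$ picks a hash $H$ uniformly from a universal family $D\to[g]$, sets $x=H(u)$ and reports $\langle H,y\rangle$ with $y=x$ with probability $\frac{e^\epsilon}{e^\epsilon+g-1}$ and $y=i$ with probability $\frac{1}{e^\epsilon+g-1}$ for each $i\ne x$; this is $\epsilon$-LDP. LDP-FPMiner$(\mathcal{T},\mathcal{X},k,\epsilon)$: users (each holding a transaction $t\subseteq\mathcal{X}$) are randomly partitioned into three disjoint groups $G_1,G_2,G_3$. (1) With $G_1$, the SVIM protocol computes a set $S'$ of $k$ frequent items and their estimated frequencies; in SVIM each user of $G_1$ sends exactly one report produced by OLH with budget $\epsilon$ (about one item sampled from her transaction, or about the size of her transaction pruned to a candidate domain, or about one item sampled from her pruned transaction padded with dummy items). (2) Each user of $G_2$ reports the number $|t\cap S'|$ via OLH with budget $\epsilon$; the analyst sets $M$ to the estimated 80th percentile of these numbers. (3) With $G_3$, a noisy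 FP-tree is built: $G_3$ is split into $M$ disjoint groups $g_1,\dots,g_M$; each user keeps the items of her transaction in $S'$ sorted by descending estimated frequency; at level $l$ the analyst forms (from previously released estimates only) a candidate set $C_l$ of prefixes, and each user of $g_l$ reports once, via OLH with budget $\epsilon$ over $C_l\cup\{\dagger\}$, her first $l$ items (or $\dagger$ if not in $C_l$). (4) The analyst mines the noisy tree with the FP-growth algorithm and releases $k$ itemsets. *)

(* Defs.v *)
From HB Require Import structures.
From mathcomp Require Import all_boot all_order all_algebra.
From mathcomp Require Import reals.
From mathcomp Require Import sequences exp.
Set Implicit Arguments. Unset Strict Implicit. Unset Printing Implicit Defensive.
Import Order.TTheory GRing.Theory Num.Theory.
Local Open Scope ring_scope.

(* A randomized algorithm with inputs in I and finitely many outputs O is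
   modelled by its output distribution: A t o = Pr[A(t) = o]. *)
Definition eps_LDP (R : realType) (eps : R) (I : Type) (O : finType)
  (A : I -> O -> R) : Prop :=
  forall (ti tj : I) (o : O), A ti o <= expR eps * A tj o.

Definition olh_g (R : realType) (eps : R) : nat := `|Num.ceil (expR eps + 1)|%N.

Record hfam (D : finType) (g : nat) := HFam {
  hT :> finType;
  hash : hT -> D -> 'I_g;
  hT_nonempty : (0 < #|hT|)%N;
  hT_universal : forall x y : D, x != y ->
     (#|[set h : hT | hash h x == hash h y]| * g <= #|hT|)%N }.

(* OLH with budget eps over D: H uniform in the family, x = H(u), y = x w.p.
   e^eps/(e^eps+g-1) and y = i w.p. 1/(e^eps+g-1) for each i <> x.
   The report is the pair <H, y>. *)
Definition olh (R : realType) (eps : R) (D : finType)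
  (hf : hfam D (olh_g eps)) (u : D) (o : (hT hf * 'I_(olh_g eps))%type) : R :=
  let den := expR eps + (olh_g eps)%:R - 1 in
  (#|hT hf|%:R)^-1 *
  (if o.2 == hash o.1 u then expR eps / den else den^-1).

(* A user's report: a local randomized encoding of the transaction into D
   (enc t v = Pr[encoding of t = v]), followed by OLH over D. *)
Definition enc_then_olh (R : realType) (eps : R) (T : Type) (D : finType)
  (enc : T -> D -> R) (hf : hfam D (olh_g eps)) (t : T)
  (o : (hT hf * 'I_(olh_g eps))%type) : R :=
  \sum_(v : D) enc t v * @olh R eps D hf v o.

Section Encodings.
Variables (R : realType) (X : finType).

(* Padding-and-sampling: the transaction t is pruned to C, padded with
   dummy items to length L (L >= 1, here L = Lm1.+1), and one element of the
   padded transaction is sampled uniformly; dummies are 'I_L. *)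
Definition ps_enc (C : {set X}) (Lm1 : nat) (t : {set X})
  (v : (X + 'I_Lm1.+1)%type) : R :=
  let t' := t :&: C in
  let k := #|t'| in
  match v with
  | inl x => if x \in t' then ((maxn k Lm1.+1)%:R)^-1 else 0
  | inr i => if (i < Lm1.+1 - k)%N then (Lm1.+1%:R)^-1 else 0
  end.

Definition det_enc (T : Type) (D : finType) (f : T -> D) (t : T) (v : D) : R :=
  if v == f t then 1 else 0.

Definition size_in (C : {set X}) (t : {set X}) : 'I_(#|C|.+1) :=
  inord #|t :&: C|.

(* The user's items of S' sorted by descending estimated frequency: the analyst
   publishes S' as the list [order] already sorted; at level l the user
   reports her first l items if she has at least l items and they form a
   prefix in C_l, and the dummy None (= dagger) otherwise. *)
Definition level_prefix (order : seq X) (l : nat) (Cl : seq (seq X))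
  (t : {set X}) : option (seq_sub Cl) :=
  let s := [seq x <- order | x \in t] in
  if (l <= size s)%N then insub (take l s) else None.

End Encodings.

(* Every user of LDP-FPMiner belongs to exactly one group and sends exactly one
   report; the public parameters of that report (candidate sets, padding
   length, S', its frequency order, C_l, the hash family) are chosen by the
   analyst from the reports of other users only. *)
Inductive role (X : finType) (g : nat) : Type :=
  (* G1 / SVIM: one item sampled from the transaction pruned to C, padded *)
  | RSample (C : {set X}) (Lm1 : nat) (hf : hfam (X + 'I_Lm1.+1)%type g)
  | RSvimSize (C : {set X}) (hf : hfam 'I_(#|C|.+1) g)
  | RSize (Sp : {set X}) (hf : hfam 'I_(#|Sp|.+1) g)
  (* G3, group g_l: first l items of t \cap S' (sorted), or dagger *)
  | RLevel (order : seq X) (l : nat) (Cl : seq (seq X))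
           (hf : hfam (option (seq_sub Cl)) g).

Definition report_type (X : finType) (g : nat) (r : role X g) : finType :=
  match r with
  | RSample _ _ hf => (hT hf * 'I_g)%type
  | RSvimSize _ hf => (hT hf * 'I_g)%type
  | RSize _ hf => (hT hf * 'I_g)%type
  | RLevel _ _ _ hf => (hT hf * 'I_g)%type
  end.

Definition user_report (R : realType) (eps : R) (X : finType)
  (r : role X (olh_g eps)) : {set X} -> report_type r -> R :=
  match r with
  | RSample C Lm1 hf => @enc_then_olh R eps {set X} _ (@ps_enc R X C Lm1) hf
  | RSvimSize C hf => @enc_then_olh R eps {set X} _ (det_enc R (size_in C)) hf
  | RSize Sp hf => @enc_then_olh R eps {set X} _ (det_enc R (size_in Sp)) hf
  | RLevel order l Cl hf => @enc_then_olh R eps {set X} _ (det_enc R (level_prefix order l Cl)) hf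
  end.

(* The LDP-FPMiner protocol for n users: a partition of the users into roles
   (each user gets exactly one role, i.e. sends exactly one report). *)
Definition ldp_fpminer_user_mech (R : realType) (eps : R) (X : finType) (n : nat)
  (assign : 'I_n -> role X (olh_g eps)) (i : 'I_n) :
  {set X} -> report_type (assign i) -> R :=
  @user_report R eps X (assign i).

(* Main.v *)
Require Import Defs.
From HB Require Import structures.
From mathcomp Require Import all_boot all_order all_algebra.
From mathcomp Require Import reals.
From mathcomp Require Import sequences exp.
From mathcomp Require Import lra.
Import Order.TTheory GRing.Theory Num.Theory.
Local Open Scope ring_scope.

Section Aux.
Variable R : realType.

Lemma mix_bound (D : finType) (p q f : D -> R) (e : R) :
  (forall v, 0 <= p v) -> (forall v, 0 <= q v) ->
  \sum_v p v = 1 -> \sum_v q v = 1 ->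
  (forall v w, f v <= e * f w) ->
  \sum_v p v * f v <= e * \sum_v q v * f v.
Proof.
move=> p0 q0 sp sq hf.
have H1 : forall w, \sum_v p v * f v <= e * f w.
  move=> w; apply: (@le_trans _ _ (\sum_v p v * (e * f w))).
    by apply: ler_sum => v _; apply: ler_wpM2l.
  by rewrite -big_distrl /= sp mul1r.
rewrite -[X in X <= _]mul1r -sq big_distrl /= big_distrr /=.
apply: ler_sum => w _; rewrite mulrCA; apply: ler_wpM2l => //.
Qed.

Lemma olh_bound (eps : R) (heps : 0 < eps) (D : finType)
  (hf : hfam D (olh_g eps)) v w o :
  @olh R eps D hf v o <= expR eps * @olh R eps D hf w o.
Proof.
rewrite /olh /=.
set c := (#|hT hf|%:R)^-1.
set den := expR eps + (olh_g eps)%:R - 1.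
have e1 : 1 <= expR eps by rewrite -expR0 ler_expR ltW.
have dpos : 0 < den.
  rewrite /den; have : 0 <= ((olh_g eps)%:R : R) by [].
  have : 1 < expR eps by rewrite -expR0 ltr_expR.
  move=> h1 h2; lra.
have c0 : 0 <= c by rewrite /c invr_ge0.
rewrite mulrCA; apply: ler_wpM2l => //.
have d0 : 0 <= den^-1 by rewrite invr_ge0 ltW.
move: d0; set d := den^-1; move: e1; set e := expR eps => e1 d0.
case: ifP; case: ifP => _ _; rewrite ?mulrA; clearbody d e c den; have ed : 0 <= (e - 1) * d by apply: mulr_ge0 => //; lra. all: nra.
Qed.

Lemma eto_ldp (eps : R) (heps : 0 < eps) (T : Type) (D : finType)
  (enc : T -> D -> R) (hf : hfam D (olh_g eps)) :
  (forall t v, 0 <= enc t v) -> (forall t, \sum_v enc t v = 1) ->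
  @eps_LDP R eps T _ (@enc_then_olh R eps T D enc hf).
Proof.
move=> e0 es ti tj o; rewrite /enc_then_olh.
apply: mix_bound => // v w; exact: olh_bound.
Qed.

Lemma det_ok (T : Type) (D : finType) (f : T -> D) :
  (forall t v, 0 <= det_enc R f t v) /\ (forall t, \sum_v det_enc R f t v = 1).
Proof.
split; first by move=> t v; rewrite /det_enc; case: ifP.
move=> t; rewrite /det_enc (bigD1 (f t)) //= eqxx big1 ?addr0 //.
by move=> v /negbTE ->.
Qed.

Lemma ps_ok (X : finType) (C : {set X}) (Lm1 : nat) :
  (forall t v, 0 <= @ps_enc R X C Lm1 t v) /\
  (forall t, \sum_v @ps_enc R X C Lm1 t v = 1).
Proof.
split.
  by move=> t [x|i]; rewrite /ps_enc; case: ifP => _ //; rewrite invr_ge0.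
move=> t; rewrite big_sumType /= /ps_enc.
set k := #|t :&: C|.
rewrite -big_mkcond /= sumr_const -big_mkcond /=.
have -> : \sum_(i < Lm1.+1 | (i < Lm1.+1 - k)%N) (Lm1.+1%:R : R)^-1 =
          (Lm1.+1%:R : R)^-1 *+ (Lm1.+1 - k).
  rewrite -(big_mkord (fun i => (i < Lm1.+1 - k)%N) (fun _ => (Lm1.+1%:R : R)^-1)).
  rewrite -(@big_nat_widen _ _ _ 0 (Lm1.+1 - k) Lm1.+1 xpredT) ?leq_subr //.
  by rewrite sumr_const_nat subn0.
rewrite -/k; clearbody k; rewrite -(mulr_natr _ k) -(mulr_natr _ (Lm1.+1 - k)).
have L0 : (Lm1.+1%:R : R) != 0 by rewrite pnatr_eq0.
case: (leqP k Lm1.+1) => hk.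
  rewrite natrB // -mulrDr addrC subrK mulVf //.
rewrite (eqP (_ : Lm1.+1 - k == 0)%N) ?subn_eq0 ?(ltnW hk) //.
rewrite mulr0 addr0 mulVf // pnatr_eq0 -lt0n.
by apply: leq_ltn_trans hk.
Qed.

End Aux.

Theorem theorem4p3 (R : realType) (eps : R) (heps : 0 < eps) (X : finType)
  (n : nat) (assign : 'I_n -> role X (olh_g eps)) (i : 'I_n) :
  @eps_LDP R eps {set X} _ (@ldp_fpminer_user_mech R eps X n assign i).
Proof.
rewrite /ldp_fpminer_user_mech; case: (assign i) => [C Lm1 hf|C hf|Sp hf|ord l Cl hf] /=.
- by case: (@ps_ok R X C Lm1) => h1 h2; apply: eto_ldp.
- by case: (@det_ok R _ _ (size_in C)) => h1 h2; apply: eto_ldp.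
- by case: (@det_ok R _ _ (size_in Sp)) => h1 h2; apply: eto_ldp.
- case: (@det_ok R {set X} _ (level_prefix ord l Cl)) => h1 h2.
  exact: (@eto_ldp R eps heps {set X} _ _ hf h1 h2).
Qed.
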